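(* For every $t\geq 0$ let $Q_t$, $M_t$ and $\psi_t$ be real random variables (on a common probability space) such that $M_t\neq 0$ almost surely and $\psi_t$ is independent of $(Q_t,M_t)$. Suppose $\psi$ is a real random variable satisfying \[ \psi = Q_t + M_t\,\psi_t \quad \text{for all } t\geq 0, \] and such that $\psi$ has the same distribution as $\psi_t$ for all $t\geq 0$, and suppose further that $Q_t\to\psi$ in probability as $t\to\infty$. Then the distribution of $\psi$ has an atom if and only if $\psi$ is almost surely equal to a constant. *)

(* Defs.v *)
From HB Require Import structures.
From mathcomp Require Import all_boot all_order all_algebra.
From mathcomp Require Import all_classical all_reals all_analysis.
Set Implicit Arguments. Unset Strict Implicit. Unset Printing Implicit Defensive.
Import Order.TTheory GRing.Theory Num.Theory.
Import numFieldNormedType.Exports.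
Local Open Scope classical_set_scope.
Local Open Scope ring_scope.

Definition indep_rv_pair d (T : measurableType d) (R : realType)
  (P : probability T R) (X Y Z : T -> R) : Prop :=
  forall (A : set R) (B : set (R * R)%type),
    measurable A -> measurable B ->
    P (X @^-1` A `&` (fun x => (Y x, Z x)) @^-1` B)
    = (P (X @^-1` A) * P ((fun x => (Y x, Z x)) @^-1` B))%E.

Definition cvg_in_prob d (T : measurableType d) (R : realType)
  (P : probability T R) (X : R -> T -> R) (Y : T -> R) : Prop :=
  forall eps : R, 0 < eps ->
    (fun t => P [set x | eps <= `|X t x - Y x| ]) @ +oo --> 0%E.

(* Main.v *)
Require Import Defs.
From HB Require Import structures.
From mathcomp Require Import all_boot all_order all_algebra.
From mathcomp Require Import all_classical all_reals all_analysis.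
From mathcomp Require Import measurable_realfun ring lra.
Import Order.TTheory GRing.Theory Num.Theory.
Import numFieldNormedType.Exports.
Local Open Scope classical_set_scope.
Local Open Scope ring_scope.

Set Implicit Arguments. Unset Strict Implicit. Unset Printing Implicit Defensive.

Section prob_basics.
Context d (T : measurableType d) (R : realType) (P : probability T R).
Local Open Scope ereal_scope.

Lemma ae_le (E A B : set T) : {ae P, forall x, E x} ->
  measurable A -> measurable B -> (forall x, E x -> A x -> B x) -> P A <= P B.
Proof.
case=> N [mN N0 EN] mA mB AB.
apply: (@le_trans _ _ (P (B `|` N))).
  apply: le_measure; rewrite ?inE //; first exact: measurableU.
  move=> x Ax; have [Ex|nEx] := pselect (E x); first by left; apply: AB.
  by right; apply: EN.
apply: (le_trans (measureU2 _ _ _)) => //. rewrite -[leRHS]adde0 leeD2l // le_eqVlt; apply/orP; left; apply/eqP; exact: N0.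
Qed.

Lemma ae_eqP (E A B : set T) : {ae P, forall x, E x} ->
  measurable A -> measurable B -> (forall x, E x -> (A x <-> B x)) -> P A = P B.
Proof.
move=> hE mA mB AB; apply/eqP; rewrite eq_le; apply/andP; split.
  by apply: (ae_le hE) => // x /AB [].
by apply: (ae_le hE) => // x /AB [].
Qed.

Lemma null_ae (A : set T) : measurable A -> P A = 0 -> {ae P, forall x, ~ A x}.
Proof.
move=> mA PA; exists A; split => // x /=; exact: contrapT.
Qed.

Lemma ae_prob1 (E A : set T) : {ae P, forall x, E x} -> measurable A ->
  (forall x, E x -> A x) -> P A = 1.
Proof.
move=> hE mA EA; apply/eqP; rewrite eq_le probability_le1 //=.
rewrite -(probability_setT P); by apply: (ae_le hE) => // x /EA.
Qed.

End prob_basics.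

Lemma inj_incr (R : realDomainType) (u : nat -> R) : (forall n, u n < u n.+1) -> injective u.
Proof.
move=> hu.
have lt : forall m k, u m < u (m + k.+1)%N.
  move=> m; elim=> [|k IH]; first by rewrite addn1; move: (hu m); apply.
  by apply: (lt_trans IH); rewrite !addnS; exact: hu.
move=> m n; have [mn|nm|//] := ltngtP m n.
- by move=> e; have := lt m (n - m.+1)%N; rewrite addnS -addSn subnKC // e ltxx.
- by move=> e; have := lt n (m - n.+1)%N; rewrite addnS -addSn subnKC // e ltxx.
Qed.

Section few_atoms.
Context d (T : measurableType d) (R : realType) (P : probability T R).
Local Open Scope ereal_scope.

Lemma few_atoms (psi : {RV P >-> R}) (y : nat -> R) (p0 : R) : (0 < p0)%R ->
  injective y -> (forall n, p0%:E <= P [set x | psi x = y n]) -> False.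
Proof.
move=> p00 iy hy.
pose E n := [set x | exists i, (i < n)%N /\ psi x = y i].
have mpre : forall r, measurable [set x | psi x = r].
  move=> r; rewrite -[X in measurable X]setTI.
  exact: (measurable_funP psi measurableT _ (measurable_set1 r)).
have key : forall n, measurable (E n) /\ (n%:R * p0)%:E <= P (E n).
  elim=> [|n [mE IH]].
    have -> : E 0%N = set0 by apply/seteqP; split => x // [i []].
    by rewrite mul0r; split => //; rewrite measure0.
  have -> : E n.+1 = E n `|` [set x | psi x = y n].
    apply/seteqP; split => x /=.
      move=> [i [+ e]]; rewrite ltnS leq_eqVlt => /orP[/eqP ie|lt].
        by right; rewrite e ie.
      by left; exists i.
    move=> [[i [lt e]]|e]; first by exists i; split => //; apply: ltnW.
    by exists n.
  split; first exact: measurableU.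
  rewrite measureU //; last first.
    apply/seteqP; split => x // [[i [lt e1]] e2].
    by move: lt; rewrite (iy i n) ?ltnn // -e1 -e2.
  rewrite -natr1 mulrDl mul1r EFinD; exact: (leeD IH (hy n)).
have [_ h] := key (Num.truncn p0^-1).+1.
have : (1 < ((Num.truncn p0^-1).+1%:R * p0))%R.
  rewrite -ltr_pdivrMr // div1r; exact: truncnS_gt.
move=> /[dup] lt1; rewrite -lte_fin => /lt_le_trans /(_ h).
by rewrite ltNge probability_le1 //; case: (key (Num.truncn p0^-1).+1).
Qed.

End few_atoms.

Section int_max.
Context d (T : measurableType d) (R : realType) (P : probability T R).
Local Open Scope ereal_scope.

Lemma int_max (G : T -> \bar R) (p : R) :
  measurable_fun setT G -> (forall x, 0 <= G x) ->
  {ae P, forall x, G x <= p%:E} -> \int[P]_x G x = p%:E ->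
  {ae P, forall x, G x = p%:E}.
Proof.
move=> mG G0 Gp IG.
have p0 : (0 <= p)%R by rewrite -lee_fin -IG; apply: integral_ge0.
have key : forall n : nat, {ae P, forall x, ((p - n.+1%:R^-1)%:E < G x)}.
  move=> n; set c := (n.+1%:R^-1)%R.
  have c0 : (0 < c)%R by rewrite invr_gt0.
  set B := [set x | G x <= (p - c)%:E].
  have mB : measurable B.
    by rewrite -[B]setTI; apply: measurable_lee => //; exact: measurable_cst.
  have PB0 : P B = 0.
    have h1 : \int[P]_x (G x + c%:E * (\1_B x)%:E) <= p%:E.
      rewrite -[leRHS]mule1 -(probability_setT P) -integral_cst //.
      apply: ae_ge0_le_integral => //.
      - by move=> x _; rewrite adde_ge0 // mule_ge0 // lee_fin ltW.
      - apply: emeasurable_funD => //; apply: emeasurable_funM => //.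
        by apply/measurable_EFinP; exact: measurable_indic.
      apply: filterS Gp => x Gx _; rewrite indicE.
      have [xB|xB] := boolP (x \in B).
        rewrite mule1; move: xB; rewrite inE /B /= => xB.
        by rewrite -leeBrDr // -EFinB.
      by rewrite mule0 adde0.
    move: h1; rewrite ge0_integralD //; last 2 first.
    - by move=> x _; rewrite mule_ge0 // lee_fin ltW.
    - apply: emeasurable_funM => //.
      by apply/measurable_EFinP; exact: measurable_indic.
    rewrite ge0_integralZl //; last by rewrite lee_fin ltW.
    rewrite integral_indic // setIT IG -[X in _ <= X]adde0 leeD2lE //.
    by rewrite pmule_rle0 ?lte_fin // measure_le0 => /eqP.
    by apply/measurable_EFinP; exact: measurable_indic.
  apply: filterS (null_ae mB PB0) => x; rewrite /B /= => /negP.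
  by rewrite -ltNge.
have := ae_foralln key.
apply: filterS2 Gp => x Gx Hx.
move: (G0 x) Gx Hx; case: (G x) => [r| |] //= r0 rp Hx.
congr (_%:E); apply/eqP; rewrite eq_le -lee_fin rp /=.
rewrite leNgt; apply/negP => /ltr_add_invr [k].
by move: (Hx k); rewrite lte_fin ltrBlDr => /lt_trans /[apply]; rewrite ltxx.
Qed.

End int_max.

Lemma cvg_ex (R : realType) (g : R -> \bar R) : g @ +oo --> 0%E ->
  forall eta : R, 0 < eta -> exists t : R, 0 <= t /\ (g t <= eta%:E)%E.
Proof.
move=> /fine_cvgP [gfin gc] eta eta0.
have := (cvgrPdist_le _ _).1 gc eta eta0.
move=> h.
have : \forall t \near +oo, (g t \is a fin_num) /\ (`|0 - (fine \o g) t| <= eta).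
  by apply: (@filterS2 _ _ _ _ _ _ _ gfin (h _)) => t a b; split.
move=> [M [Mr HM]].
exists (Num.max (M + 1) 0); split; first by rewrite le_max lexx orbT.
have Mt : M < Num.max (M + 1) 0.
  by rewrite (lt_le_trans (_ : M < M + 1)) ?ltrDl // le_max lexx.
have [f1 f2] := HM _ Mt.
by move: f2; rewrite /= sub0r normrN => /(le_trans (ler_norm _)); rewrite -lee_fin fineK.
Qed.

Section fub.
Context d (T : measurableType d) (R : realType) (P : probability T R).
Variables (X Y Z : {RV P >-> R}).

Definition pYZ (x : T) : R * R := (Y x, Z x).
Lemma mpYZ : measurable_fun setT pYZ.
Proof. by apply/measurable_fun_pairP; split. Qed.
HB.instance Definition _ := isMeasurableFun.Build _ _ _ _ pYZ mpYZ.
Definition pj (x : T) : (R * R) * R := (pYZ x, X x).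
Lemma mpj : measurable_fun setT pj.
Proof. by apply/measurable_fun_pairP; split => //=; exact: mpYZ. Qed.
HB.instance Definition _ := isMeasurableFun.Build _ _ _ _ pj mpj.

Hypothesis hi : indep_rv_pair P X Y Z.

Lemma joint_prod (S : set ((R * R) * R)) : measurable S ->
  distribution P pj S = (distribution P pYZ \x distribution P X)%E S.
Proof.
move=> mS; symmetry.
apply: (product_measure_unique (m1 := distribution P pYZ) (m2 := distribution P X)
  (m' := distribution P pj)) => // A B mA mB.
rewrite /distribution /pushforward.
transitivity (P (X @^-1` B `&` (fun x => (Y x, Z x)) @^-1` A)).
  by congr (P _); apply/seteqP; split => x /= [].
by rewrite hi // muleC.
Qed.

Definition Sa (a : R) := [set u : (R * R) * R | u.1.1 + u.1.2 * u.2 = a].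

Lemma mSa a : measurable (Sa a).
Proof.
have mf : measurable_fun setT (fun u : (R * R) * R => u.1.1 + u.1.2 * u.2).
  apply: measurable_funD.
    exact: (measurableT_comp measurable_fst measurable_fst).
  apply: measurable_funM; last exact: measurable_snd.
  exact: (measurableT_comp measurable_snd measurable_fst).
rewrite /Sa -[X in measurable X]setTI.
exact: (mf measurableT _ (measurable_set1 a)).
Qed.

Lemma key_fub (a : R) :
  P [set x | Y x + Z x * X x = a] =
  (\int[P]_x distribution P X (xsection (Sa a) (Y x, Z x)))%E.
Proof.
rewrite [LHS](_ : _ = distribution P pj (Sa a)) //.
rewrite joint_prod; last exact: mSa.
rewrite /product_measure1 /=.
rewrite ge0_integral_distribution //.
exact: (measurable_fun_xsection (distribution P X) (mSa a)).
Qed.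

Lemma xsection_Sa a q m y : m != 0 ->
  xsection (Sa a) (q, m) y <-> y = (a - q) / m.
Proof.
move=> m0; rewrite /xsection /Sa /= inE /=; split => [<-|->]; by field.
Qed.

End fub.

Section step3.
Context d (T : measurableType d) (R : realType) (P : probability T R).

Lemma mpre (psi : {RV P >-> R}) r : measurable [set x | psi x = r].
Proof. rewrite -[X in measurable X]setTI; exact: (measurable_funP psi measurableT _ (measurable_set1 r)). Qed.

Lemma step3 (X Y Z psi : {RV P >-> R}) :
  indep_rv_pair P X Y Z -> {ae P, forall x, Z x != 0} ->
  {ae P, forall x, psi x = Y x + Z x * X x} ->
  (forall A, measurable A -> distribution P psi A = distribution P X A) ->
  forall a : R, (forall y, (P [set x | psi x = y] <= P [set x | psi x = a])%E) ->
  {ae P, forall x, P [set w | psi w = (a - Y x) / Z x] = P [set w | psi w = a]}.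
Proof.
move=> hi hM hpsi hd a amax.
have pfin : P [set w | psi w = a] \is a fin_num by exact: fin_num_measure (mpre psi a).
set pr := fine (P [set w | psi w = a]).
have prE : P [set w | psi w = a] = pr%:E by rewrite fineK.
pose G x := distribution P X (xsection (Sa a) (Y x, Z x)).
have mG : measurable_fun setT G.
  exact: (measurableT_comp (measurable_fun_xsection (distribution P X) (mSa a)) (mpYZ Y Z)).
have GE : {ae P, forall x, G x = P [set w | psi w = (a - Y x) / Z x]}.
  apply: filterS hM => x Zx; rewrite /G.
  rewrite (_ : xsection _ _ = [set (a - Y x) / Z x]).
    by rewrite -hd //; exact: measurable_set1.
  by apply/seteqP; split => y /=; rewrite xsection_Sa.
have IG : (\int[P]_x G x)%E = pr%:E.
  rewrite -key_fub // -prE.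
  apply: (ae_eqP hpsi); [|exact: (mpre _)|move=> x e /=; rewrite e; exact: iff_refl].
  rewrite /= -[X in measurable X]setTI.
  have mf : measurable_fun setT (fun x => Y x + Z x * X x).
    apply: measurable_funD => //; exact: measurable_funM.
  exact: (mf measurableT _ (measurable_set1 a)).
have Gle : {ae P, forall x, (G x <= pr%:E)%E}.
  by apply: filterS GE => x ->; rewrite -prE.
have := int_max mG (fun x => measure_ge0 _ _) Gle IG.
apply: filterS2 GE => x -> ->; by rewrite prE.
Qed.

End step3.

Section atoms.
Context d (T : measurableType d) (R : realType) (P : probability T R).
Variable psi : {RV P >-> R}.
Let f y := P [set x | psi x = y].

Let ffin y : f y = (fine (f y))%:E.
Proof. by rewrite fineK //; exact: fin_num_measure (mpre psi y). Qed.

Lemma max_atom a0 : (0 < f a0)%E ->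
  exists a, (0 < f a)%E /\ forall y, (f y <= f a)%E.
Proof.
move=> fa0; apply: contrapT => nex.
have hg : forall a : R, exists y : R, (f a0 <= f a)%E -> (f a < f y)%E.
  move=> a; have [fa|fa] := pselect (f a0 <= f a)%E; last by exists a.
  apply: contrapT => /forallNP hn; apply: nex; exists a; split.
    exact: lt_le_trans fa.
  by move=> y; have /not_implyP [_ /negP] := hn y; rewrite -leNgt.
have [g hgP] := choice hg.
pose y n := iter n g a0.
have yge : forall n, (f a0 <= f (y n))%E.
  elim=> [|n IH] //=; apply: (le_trans IH); apply/ltW; exact: hgP.
have yinc : forall n, fine (f (y n)) < fine (f (y n.+1)).
  by move=> n; rewrite -lte_fin -!ffin; exact: hgP.
apply: (@few_atoms _ _ _ P psi y (fine (f a0))).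
- by rewrite -lte_fin -ffin.
- by move=> m n e; apply: (inj_incr yinc); rewrite /= e.
- by move=> n; rewrite -ffin; exact: yge.
Qed.

Lemma bounded_atoms (p : R) : 0 < p ->
  exists R0, 0 < R0 /\ forall y, (p%:E <= f y)%E -> `|y| <= R0.
Proof.
move=> p0; apply: contrapT => nex.
have hh : forall r : R, exists y : R, 0 < r -> (p%:E <= f y)%E /\ r < `|y|.
  move=> r; have [r0|r0] := pselect (0 < r); last by exists 0.
  apply: contrapT => /forallNP hn; apply: nex; exists r; split => // y fy.
  rewrite leNgt; apply/negP => ry; apply: (hn y) => _; split => //.
have [h hP] := choice hh.
pose k (z : R) := h (`|z| + 1).
pose y n := iter n k (h 1).
have hk : forall z, (p%:E <= f (k z))%E /\ `|z| + 1 < `|k z|.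
  by move=> z; apply: hP; rewrite ltr_wpDl.
have yinc : forall n, `|y n| < `|y n.+1|.
  move=> n; rewrite /y /=; have [_ h2] := hk (iter n k (h 1)).
  by apply: lt_trans h2; rewrite ltrDl.
apply: (@few_atoms _ _ _ P psi y p p0).
- by move=> m n e; apply: (inj_incr yinc); rewrite /= e.
- by case=> [|n] /=; [exact: (hP 1 ltr01).1|exact: (hk _).1].
Qed.

End atoms.

Lemma mset_ge d (T : measurableType d) (R : realType) (f : T -> R) (e : R) :
  measurable_fun setT f -> measurable [set x | e <= f x].
Proof.
move=> mf; rewrite -[X in measurable X]setTI -preimage_itvcy.
exact: (mf measurableT _ (measurable_itv _)).
Qed.

Section final.
Context d (T : measurableType d) (R : realType) (P : probability T R).

Lemma mdist (U V : {RV P >-> R}) e : measurable [set x | e <= `|U x - V x|].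
Proof.
apply: mset_ge; apply: measurableT_comp => //; exact: measurable_funB.
Qed.

Lemma mdistc (U : {RV P >-> R}) c e : measurable [set x | e <= `|U x - c|].
Proof.
by apply: mset_ge; apply: measurableT_comp => //; apply: measurable_funB.
Qed.

Lemma final (Q : R -> {RV P >-> R}) (psi : {RV P >-> R}) (c : R) :
  cvg_in_prob P (fun t => (Q t : T -> R)) psi ->
  (forall e : R, 0 < e -> exists K delta : R, 0 <= K /\ 0 < delta /\
     forall t : R, 0 <= t -> (P [set x | (e <= `|Q t x - c|)%R] <=
                          K%:E * P [set x | (delta <= `|Q t x - psi x|)%R])%E) ->
  {ae P, forall x, psi x = c}.
Proof.
move=> hc hK.
have key : forall e, 0 < e -> P [set x | e <= `|psi x - c|] = 0%E.
  move=> e e0.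
  have e20 : 0 < e / 2 by rewrite divr_gt0.
  have [K [delta [K0 [d0 hKt]]]] := hK _ e20.
  set dl := Num.min delta (e / 2).
  have dl0 : 0 < dl by rewrite lt_min d0 e20.
  have mono : forall t a : R, dl <= a ->
      (P [set x | (a <= `|Q t x - psi x|)%R] <= P [set x | (dl <= `|Q t x - psi x|)%R])%E.
    move=> t a al; apply: le_measure; rewrite ?inE; try exact: mdist.
    by move=> x /=; apply: le_trans.
  have bound : forall t : R, 0 <= t -> (P [set x | (e <= `|psi x - c|)%R] <=
       (1 + K)%:E * P [set x | (dl <= `|Q t x - psi x|)%R])%E.
    move=> t t0.
    apply: (@le_trans _ _ (P ([set x | (e / 2 <= `|Q t x - psi x|)%R] `|`
                             [set x | (e / 2 <= `|Q t x - c|)%R]))).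
      apply: le_measure; rewrite ?inE; try exact: mdistc.
        by apply: measurableU; [exact: mdist|exact: mdistc].
      move=> x /= hx; apply: contrapT => /not_orP [h1 h2].
      move: h1 h2 => /negP h1 /negP h2; rewrite -!ltNge in h1 h2.
      have : `|psi x - c| < e.
        rewrite (_ : psi x - c = (Q t x - c) - (Q t x - psi x)); last by ring.
        apply: (le_lt_trans (ler_normB _ _)).
        by rewrite [e]splitr; apply: ltrD.
      by rewrite ltNge hx.
    apply: (le_trans (measureU2 _ _ _)); [exact: mdist|exact: mdistc|].
    rewrite EFinD muleDl //; last exact: fin_num_measure _ _ (mdist _ _ _).
    apply: leeD.
      apply: (le_trans (mono t (e/2) _)); first by rewrite ge_min lexx orbT.
      by rewrite (_ : 1%:E = 1%E) // mul1e.
    apply: (le_trans (hKt t t0)); apply: lee_wpmul2l; first by rewrite lee_fin.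
    by apply: mono; rewrite ge_min lexx.
  apply/eqP; rewrite -measure_le0.
  apply/lee_addgt0Pr => eta eta0; rewrite add0e.
  have K1 : 0 < 1 + K by rewrite ltr_wpDr.
  have [t [t0 ht]] := cvg_ex (hc dl dl0) (divr_gt0 eta0 K1).
  apply: (le_trans (bound t t0)).
  rewrite -lee_pdivlMl //.
  by rewrite -EFinM mulrC.
pose A n := [set x | n.+1%:R^-1 <= `|psi x - c|].
have hA : forall n, {ae P, forall x, ~ A n x}.
  by move=> n; apply: null_ae; [exact: mdistc|apply: key; rewrite invr_gt0].
apply: filterS (ae_foralln hA) => x hx.
apply: contrapT => /eqP; rewrite -subr_eq0 -normr_gt0 => /ltr_add_invr [k].
by rewrite add0r => /ltW hk; apply: (hx k).
Qed.

Lemma step4 (X Y Z psi : {RV P >-> R}) :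
  indep_rv_pair P X Y Z ->
  {ae P, forall x, psi x = Y x + Z x * X x} ->
  (forall A, measurable A -> distribution P psi A = distribution P X A) ->
  forall a e : R, (P [set x | psi x = a] * P [set x | (e <= `|Z x|)%R] <=
                   P [set x | (e * `|a| <= `|Y x - psi x|)%R])%E.
Proof.
move=> hi hpsi hd a e.
have mB : measurable [set u : R * R | e <= `|u.2|].
  by apply: mset_ge; apply: measurableT_comp => //; exact: measurable_snd.
have -> : P [set x | psi x = a] = P (X @^-1` [set a]).
  exact: (hd _ (measurable_set1 a)).
have -> : P [set x | (e <= `|Z x|)%R] =
    P ((fun x => (Y x, Z x)) @^-1` [set u : R * R | e <= `|u.2|]) by [].
rewrite -(hi _ _ (measurable_set1 a) mB).
apply: (ae_le hpsi).
- apply: measurableI.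
    by rewrite -[X in measurable X]setTI; exact: (measurable_funP X measurableT _ (measurable_set1 a)).
  exact: (measurable_funPTI (pYZ Y Z) mB).
- exact: mdist.
move=> x hx /= [h1 hz]; rewrite hx h1.
rewrite (_ : Y x - (Y x + Z x * a) = - (Z x * a)); last by ring.
by rewrite normrN normrM ler_wpM2r.
Qed.

End final.

Unset Implicit Arguments. Set Strict Implicit. Set Printing Implicit Defensive.

Theorem lemma2p1 (d : measure_display) (T : measurableType d) (R : realType)
  (P : probability T R)
  (Q M psit : R -> {RV P >-> R}) (psi : {RV P >-> R}) :
  (forall t : R, 0 <= t -> {ae P, forall x, M t x != 0}) ->
  (forall t : R, 0 <= t -> indep_rv_pair P (psit t) (Q t) (M t)) ->
  (forall t : R, 0 <= t -> {ae P, forall x, psi x = Q t x + M t x * psit t x}) ->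
  (forall t : R, 0 <= t -> forall A : set R, measurable A ->
     distribution P psi A = distribution P (psit t) A) ->
  cvg_in_prob P (fun t => (Q t : T -> R)) psi ->
  ((exists a : R, (0 < distribution P psi [set a])%E) <->
   (exists c : R, {ae P, forall x, psi x = c})).
Proof.
move=> hM hi hpsi hd hc; split; last first.
  move=> [c hc']; exists c.
  rewrite (_ : distribution P psi [set c] = P [set x | psi x = c]) //.
  by rewrite (ae_prob1 hc' (mpre psi c)) // lte_fin ltr01.
move=> [a0 ha0].
have [a [fa amax]] := max_atom (ha0 : (0 < P [set x | psi x = a0])%E).
have pfin : P [set w | psi w = a] \is a fin_num by exact: fin_num_measure (mpre psi a).
set pr := fine (P [set w | psi w = a]).
have prE : P [set w | psi w = a] = pr%:E by rewrite fineK.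
have pr0 : 0 < pr by rewrite -lte_fin -prE.
have [R0 [R00 hR0]] := bounded_atoms psi pr0.
have [[b [b0 fb]]|nb] := pselect (exists b, b != 0 /\
    P [set x | psi x = b] = P [set x | psi x = a]).
- have bmax : forall y, (P [set x | psi x = y] <= P [set x | psi x = b])%E.
    by move=> y; rewrite fb.
  exists b; apply: (final hc) => e e0.
  exists pr^-1, (e / R0 * `|b|); split; first by rewrite invr_ge0 ltW.
  split; first by rewrite mulr_gt0 ?divr_gt0 ?normr_gt0.
  move=> t t0.
  have h3 := step3 (hi t t0) (hM t t0) (hpsi t t0) (hd t t0) bmax.
  have h4 := step4 (hi t t0) (hpsi t t0) (hd t t0) b (e / R0).
  have hE : {ae P, forall x, P [set w | psi w = (b - Q t x) / M t x] =
      P [set w | psi w = b] /\ M t x != 0}.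
    by move: (hM t t0); apply: filterS2 h3 => x h1 h2.
  apply: (@le_trans _ _ (P [set x | (e / R0 <= `|M t x|)%R])).
    apply: (ae_le hE); [exact: mdistc| |].
      apply: mset_ge; exact: measurableT_comp.
    move=> x [h1 h2] /= h.
    have gR : `|(b - Q t x) / M t x| <= R0.
      by apply: hR0; rewrite h1 fb prE.
    have hb : `|b - Q t x| <= R0 * `|M t x|.
      rewrite -[b - Q t x](@divfK _ (M t x)) // normrM.
      by apply: ler_wpM2r.
    rewrite ler_pdivrMr // mulrC.
    by apply: (le_trans h); rewrite distrC.
  by rewrite lee_pdivlMl // -prE -fb.
- exists a; apply: (final hc) => e e0.
  exists 0, 1; split => //; split => // t t0.
  have h3 := step3 (hi t t0) (hM t t0) (hpsi t t0) (hd t t0) amax.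
  have hE : {ae P, forall x, P [set w | psi w = (a - Q t x) / M t x] =
      P [set w | psi w = a] /\ M t x != 0}.
    by move: (hM t t0); apply: filterS2 h3 => x h1 h2.
  rewrite mul0e.
  rewrite -(measure0 P).
  apply: (ae_le hE); [exact: mdistc|exact: measurable0|].
  move=> x [h1 h2] /= h.
  have g0 : (a - Q t x) / M t x = 0.
    apply: contrapT => /eqP gn; apply: nb; exists ((a - Q t x) / M t x); split => //.
  move: g0 => /eqP; rewrite mulf_eq0 invr_eq0 (negbTE h2) orbF subr_eq0 => /eqP ga.
  by move: h; rewrite -ga subrr normr0 leNgt e0.
Qed.
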